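(* Let $m,n$ be nonnegative integers. The graphs $A(m)$ and $A(n)$ are isomorphic as edge-labeled directed graphs if and only if there exists a nonnegative integer $t$ such that $m=2^tn+2^t-1$ or $n=2^tm+2^t-1$.
   Context: A hyperbinary expansion of a nonnegative integer $n$ is a word $x_0\cdots x_k$ over $\{0,1,2\}$ with $x_0\ne0$ and $\sum_i x_i2^{k-i}=n$; the empty word is the unique expansion of $0$. $\mathcal H(n)$ is the set of such expansions. $A(n)$ is the directed graph on $\mathcal H(n)$ with the following labeled arcs, for arbitrary words $\mathbf x,\mathbf y$ whenever both endpoints lie in $\mathcal H(n)$: \begin{itemize} \item an arc labeled $\to$ from $\mathbf x02\mathbf y$ to $\mathbf x10\mathbf y$ and from $2\mathbf y$ to $10\mathbf y$; \item an arc labeled $\twoheadrightarrow$ from $\mathbf x12\mathbf y$ to $\mathbf x20\mathbf y$. \end{itemize} An isomorphism of edge-labeled directed graphs is a bijection $\varphi$ of vertex sets such that $(x,y)$ is an arc with label $\ell$ if and only if $(\varphi(x),\varphi(y))$ is an arc with label $\ell$. *)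

(* Defs.v *)
From mathcomp Require Import all_boot.
Set Implicit Arguments. Unset Strict Implicit. Unset Printing Implicit Defensive.

(* Words over {0,1,2} are represented as sequences of naturals, most
   significant digit first: x_0 ... x_k. *)

Definition hval (w : seq nat) : nat := foldl (fun acc d => acc.*2 + d) 0 w.

(* w is a hyperbinary expansion of n: digits in {0,1,2}, x_0 <> 0 (if
   nonempty), value n.  The empty word is the expansion of 0. *)
Definition is_hyperbinary (n : nat) (w : seq nat) : bool :=
  all (fun d => d <= 2) w && (head 1 w != 0) && (hval w == n).

Definition H (n : nat) := {w : seq nat | is_hyperbinary n w}.

Definition arc_single (u v : seq nat) : Prop :=
  (exists x y, u = x ++ [:: 0; 2] ++ y /\ v = x ++ [:: 1; 0] ++ y) \/
  (exists y, u = 2 :: y /\ v = [:: 1, 0 & y]).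

Definition arc_double (u v : seq nat) : Prop :=
  exists x y, u = x ++ [:: 1; 2] ++ y /\ v = x ++ [:: 2; 0] ++ y.

Definition A_isomorphic (m n : nat) : Prop :=
  exists phi : H m -> H n, bijective phi /\
    forall x y : H m,
      (arc_single (val x) (val y) <-> arc_single (val (phi x)) (val (phi y))) /\
      (arc_double (val x) (val y) <-> arc_double (val (phi x)) (val (phi y))).

(* Main.v *)
Require Import Defs.
From mathcomp Require Import all_boot zify.
From Stdlib Require Import ClassicalEpsilon.
Set Implicit Arguments. Unset Strict Implicit. Unset Printing Implicit Defensive.

Definition lval (r : seq nat) : nat := foldr (fun d acc => acc.*2 + d) 0 r.
Definition lvalid (n : nat) (r : seq nat) : bool :=
  [&& all (fun d => d <= 2) r, last 1 r != 0 & lval r == n].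

Lemma lval_cons d r : lval (d :: r) = (lval r).*2 + d.
Proof. by []. Qed.

Lemma hval_rev r : hval (rev r) = lval r.
Proof. by rewrite /hval foldl_rev. Qed.

Lemma head_last_rev (s : seq nat) : head 1 s = last 1 (rev s).
Proof. by case: s => [|x s] //=; rewrite rev_cons last_rcons. Qed.

Lemma hb_rev n r : is_hyperbinary n (rev r) = lvalid n r.
Proof. by rewrite /is_hyperbinary /lvalid all_rev head_last_rev revK hval_rev andbA. Qed.

Lemma hb_lvalid n w : is_hyperbinary n w = lvalid n (rev w).
Proof. by rewrite -hb_rev revK. Qed.

Definition larc_s (r r' : seq nat) : Prop :=
  (exists p q, r = p ++ [:: 2, 0 & q] /\ r' = p ++ [:: 0, 1 & q]) \/
  (exists p, r = rcons p 2 /\ r' = p ++ [:: 0; 1]).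
Definition larc_d (r r' : seq nat) : Prop :=
  exists p q, r = p ++ [:: 2, 1 & q] /\ r' = p ++ [:: 0, 2 & q].

Lemma arc_single_rev u v : arc_single u v <-> larc_s (rev u) (rev v).
Proof.
split.
- case=> [[x [y [-> ->]]]|[y [-> ->]]].
  + by left; exists (rev y), (rev x); rewrite !rev_cat /= -!catA.
  + by right; exists (rev y); rewrite rev_cons; split=> //; rewrite !rev_cons -!cats1 -catA.
- have Eu : u = rev (rev u) by rewrite revK.
  have Ev : v = rev (rev v) by rewrite revK.
  case=> [[p [q [Eu' Ev']]]|[p [Eu' Ev']]]; rewrite Eu Ev Eu' Ev'.
  + left; exists (rev q), (rev p).
    by rewrite !rev_cat; split; rewrite !rev_cons -!cats1 -!catA.
  + right; exists (rev p).
    by rewrite rev_rcons rev_cat.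
Qed.

Lemma arc_double_rev u v : arc_double u v <-> larc_d (rev u) (rev v).
Proof.
split.
- case=> [x [y [-> ->]]].
  by exists (rev y), (rev x); rewrite !rev_cat /= -!catA.
- have Eu : u = rev (rev u) by rewrite revK.
  have Ev : v = rev (rev v) by rewrite revK.
  case=> [p [q [Eu' Ev']]]; rewrite Eu Ev Eu' Ev'.
  exists (rev q), (rev p).
  by rewrite !rev_cat; split; rewrite !rev_cons -!cats1 -!catA.
Qed.

Lemma valx m (x : H m) : lvalid m (rev (val x)).
Proof. by rewrite -hb_lvalid; case: x. Qed.

Definition mkH n r (h : lvalid n r) : H n := exist _ (rev r) (etrans (hb_rev n r) h).

Lemma iso_of_maps m n (F G : seq nat -> seq nat) :
 (forall r, lvalid m r -> lvalid n (F r)) ->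
 (forall r, lvalid n r -> lvalid m (G r)) ->
 (forall r, lvalid m r -> G (F r) = r) ->
 (forall r, lvalid n r -> F (G r) = r) ->
 (forall r1 r2, lvalid m r1 -> lvalid m r2 ->
    (larc_s r1 r2 <-> larc_s (F r1) (F r2)) /\ (larc_d r1 r2 <-> larc_d (F r1) (F r2))) ->
 A_isomorphic m n.
Proof.
move=> vF vG GF FG arcs.
pose phi (x : H m) : H n := mkH (vF _ (valx x)).
pose psi (y : H n) : H m := mkH (vG _ (valx y)).
exists phi; split.
- exists psi.
  + move=> x; apply: val_inj => /=; rewrite revK GF ?valx //; exact: revK.
  + move=> y; apply: val_inj => /=; rewrite revK FG ?valx //; exact: revK.
- move=> x y /=; rewrite !arc_single_rev !arc_double_rev !revK.
  exact: arcs (valx x) (valx y).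
Qed.

Lemma A_iso_sym m n : A_isomorphic m n -> A_isomorphic n m.
Proof.
case=> phi [[g phig gphi] harc].
exists g; split; first by exists phi.
move=> x y; have := harc (g x) (g y); rewrite !gphi.
by case=> [h1 h2]; split; split; [apply h1|apply h1|apply h2|apply h2].
Qed.

Lemma A_iso_trans m n p : A_isomorphic m n -> A_isomorphic n p -> A_isomorphic m p.
Proof.
case=> phi [bphi harc]; case=> psi [bpsi harc'].
exists (psi \o phi); split; first exact: bij_comp.
move=> x y /=; have [a1 a2] := harc x y; have [b1 b2] := harc' (phi x) (phi y).
by rewrite a1 a2 b1 b2.
Qed.

Lemma larc_s_cons1 r1 r2 : larc_s (1 :: r1) (1 :: r2) <-> larc_s r1 r2.
Proof.
split.
- case=> [[[|a p] [q [E1 E2]]]|[[|a p] [E1 E2]]] //.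
  + case: E1 => _ E1; case: E2 => _ E2; left; by exists p, q.
  + case: E1 => _ E1; case: E2 => _ E2; right; by exists p.
- case=> [[p [q [-> ->]]]|[p [-> ->]]].
  + by left; exists (1 :: p), q.
  + by right; exists (1 :: p).
Qed.

Lemma larc_d_cons1 r1 r2 : larc_d (1 :: r1) (1 :: r2) <-> larc_d r1 r2.
Proof.
split.
- case=> [[|a p] [q [E1 E2]]] //.
  case: E1 => _ E1; case: E2 => _ E2; by exists p, q.
- case=> [p [q [-> ->]]]; by exists (1 :: p), q.
Qed.

Lemma last_cons_ne0 d r : last d r != 0 -> (r == [::]) || (last 1 r != 0).
Proof. by case: r. Qed.

Lemma A_iso_succ k : A_isomorphic k k.*2.+1.
Proof.
apply: (@iso_of_maps _ _ (cons 1) behead).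
- move=> r /and3P [h1 h2 /eqP h3]; apply/and3P; split=> //=.
  by rewrite h3 addn1.
- case=> [|d r] /and3P [] //= /andP [hd hr] hl /eqP hv; apply/and3P; split=> //.
  + by move: hl; case: (r).
  + apply/eqP; move: hv; rewrite /lval /=; lia.
- by [].
- case=> [|d r] /and3P [] //= /andP [hd hr] hl /eqP hv; congr (_ :: _); move: hv; rewrite /lval /=; lia.
- by move=> r1 r2 _ _; rewrite larc_s_cons1 larc_d_cons1.
Qed.

Lemma A_iso_pow n t : A_isomorphic n (2 ^ t * n + 2 ^ t - 1).
Proof.
elim: t => [|t IH]; first by rewrite expn0 mul1n addnK; apply: (@iso_of_maps _ _ id id).
apply: A_iso_trans IH _.
have -> : 2 ^ t.+1 * n + 2 ^ t.+1 - 1 = (2 ^ t * n + 2 ^ t - 1).*2.+1.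
  have := expn_gt0 2 t; rewrite expnS; lia.
exact: A_iso_succ.
Qed.

Definition NN n k := n %/ 2 ^ k.
Definition bt n k := odd (NN n k).
Definition pv r k := lval (drop k r).
Definition nzl (s : seq nat) := last 1 s != 0.
Definition dfn n r k : bool := pv r k != NN n k.

Lemma NN_rec n k : NN n k = (NN n k.+1).*2 + bt n k.
Proof.
rewrite /bt /NN expnSr divnMA divn2.
by rewrite addnC odd_double_half.
Qed.

Lemma NN0 n : NN n 0 = n.
Proof. by rewrite /NN expn0 divn1. Qed.

Lemma pv_nth r k : pv r k = (pv r k.+1).*2 + nth 0 r k.
Proof.
rewrite /pv; case: (ltnP k (size r)) => hk.
  by rewrite (drop_nth 0 hk) lval_cons.
by rewrite !drop_oversize ?nth_default //; apply: leq_trans hk _.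
Qed.

Lemma pv0 r : pv r 0 = lval r.
Proof. by rewrite /pv drop0. Qed.

Lemma lval_cat s t : lval (s ++ t) = lval s + 2 ^ (size s) * lval t.
Proof.
elim: s => [|x s IH]; first by rewrite /= expn0 mul1n.
rewrite cat_cons !lval_cons IH /= expnS; lia.


Qed.

Lemma lval_bound s : all (fun d => d <= 2) s -> lval s + 2 <= 2 ^ (size s).+1.
Proof.
elim: s => [|x s IH]; first by [].
rewrite /= => /andP [hx /IH hs]; move: hs; rewrite /lval /= -/(lval s) !expnS; lia.


Qed.

Lemma nzl_nth s : nzl s = (s == [::]) || (nth 0 s (size s).-1 != 0).
Proof. by case: s => //= x s; rewrite /nzl (nth_last 0 (x :: s)). Qed.

Lemma nth_inj_nzl s t : nzl s -> nzl t -> (forall i, nth 0 s i = nth 0 t i) -> s = t.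
Proof.
move=> hs ht he.
have Hsz : forall a b, nzl b -> (forall i, nth 0 a i = nth 0 b i) -> size b <= size a.
  move=> a b hb hab; rewrite leqNgt; apply/negP => lt.
  move: hb; rewrite nzl_nth; case/orP.
    by move/eqP=> eb; rewrite eb in lt.
  rewrite -hab nth_default //; lia.
apply: (@eq_from_nth _ 0).
  by apply/eqP; rewrite eqn_leq !Hsz.
by move=> i _; apply: he.
Qed.

Lemma lvalid_all n r : lvalid n r -> all (fun d => d <= 2) r.
Proof. by case/and3P. Qed.
Lemma lvalid_nzl n r : lvalid n r -> nzl r.
Proof. by case/and3P. Qed.
Lemma lvalid_val n r : lvalid n r -> lval r = n.
Proof. by case/and3P=> _ _ /eqP. Qed.

Lemma pv_bound n r k : lvalid n r -> pv r k <= NN n k <= (pv r k).+1.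
Proof.
move=> hv; have ha := lvalid_all hv; have hn := lvalid_val hv.
have e := cat_take_drop k r.
have hk2 : 0 < 2 ^ k := expn_gt0 2 k.
case: (ltnP (size r) k) => hk.
  have hd : drop k r = [::] by rewrite drop_oversize // ltnW.
  rewrite /pv hd /= /NN divn_small //.
  have := lval_bound ha; have : 2 ^ (size r).+1 <= 2 ^ k by rewrite leq_exp2l.
  lia.
have hst : size (take k r) = k by rewrite size_take_min; lia.
have hb := lval_bound (s := take k r).
have ha' : all (fun d => d <= 2) (take k r).
  by move: ha; rewrite -{1}e all_cat => /andP [].
move: (hb ha'); rewrite hst => hb'.
have hn' : n = pv r k * 2 ^ k + lval (take k r).
  by rewrite -hn -{1}e lval_cat hst /pv mulnC addnC.
rewrite /NN hn' divnMDl //.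
have : lval (take k r) %/ 2 ^ k < 2 by rewrite ltn_divLR // -expnS; lia.
move: (lval (take k r) %/ 2 ^ k) => q hq; clear -hq; lia.
Qed.

Lemma pv_def n r k : lvalid n r -> pv r k = NN n k - dfn n r k /\ dfn n r k <= NN n k.
Proof.
move=> hv; have := pv_bound k hv; rewrite /dfn.
case: eqP => [->|]; first by rewrite subn0.
lia.
Qed.

Lemma pv_inj n r1 r2 : lvalid n r1 -> lvalid n r2 -> (forall k, pv r1 k = pv r2 k) -> r1 = r2.
Proof.
move=> h1 h2 he; apply: nth_inj_nzl; [exact: lvalid_nzl h1|exact: lvalid_nzl h2|].
move=> i; have := pv_nth r1 i; have := pv_nth r2 i; rewrite !he; lia.
Qed.

Lemma dfn_inj n r1 r2 : lvalid n r1 -> lvalid n r2 ->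
  (forall k, dfn n r1 k = dfn n r2 k) -> r1 = r2.
Proof.
move=> h1 h2 he; apply: (pv_inj h1 h2) => k.
by have [-> _] := pv_def k h1; have [-> _] := pv_def k h2; rewrite he.
Qed.

Definition shift (r r' : seq nat) k := forall i, pv r' i = pv r i + (i == k).

Lemma drop_cat_le i (p s : seq nat) : i <= size p -> drop i (p ++ s) = drop i p ++ s.
Proof.
rewrite drop_cat leq_eqVlt; case/orP => [/eqP ->|->] //.
by rewrite ltnn subnn drop0 drop_size.
Qed.

Lemma drop_cat_ge i (p s : seq nat) : size p <= i -> drop i (p ++ s) = drop (i - size p) s.
Proof. by rewrite drop_cat ltnNge => ->. Qed.

Lemma shift_cat (p s s' : seq nat) :
  lval s' = lval s + 1 * 0 -> size s = size s' -> True.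
Proof. by []. Qed.

Lemma pv_cat_eq (p s s' : seq nat) i : lval s = lval s' -> i <= size p ->
  pv (p ++ s) i = pv (p ++ s') i.
Proof. by move=> hs hi; rewrite /pv !drop_cat_le // !lval_cat hs. Qed.

Lemma pv_cat_ge (p s : seq nat) i : size p <= i -> pv (p ++ s) i = lval (drop (i - size p) s).
Proof. by move=> hi; rewrite /pv drop_cat_ge. Qed.

Lemma shift_mid (p q : seq nat) a b a' b' :
  a = a' + 2 -> b' = b + 1 ->
  shift (p ++ [:: a, b & q]) (p ++ [:: a', b' & q]) (size p).+1.
Proof.
move=> ha hb i; case: (ltngtP i (size p).+1) => hi.
- change (nat_of_bool false) with 0; rewrite addn0 (@pv_cat_eq p [:: a, b & q] [:: a', b' & q] i) //.
  rewrite /lval /=; lia.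
- change (nat_of_bool false) with 0; rewrite addn0 !pv_cat_ge; try lia.
  have -> : i - size p = (i - size p - 2).+2 by lia.
  by [].
- change (nat_of_bool true) with 1; rewrite hi !pv_cat_ge // subSnn /= /lval /=; lia.
Qed.

Lemma shift_lead (p : seq nat) :
  shift (rcons p 2) (p ++ [:: 0; 1]) (size p).+1.
Proof.
rewrite -cats1 => i; case: (ltngtP i (size p).+1) => hi.
- change (nat_of_bool false) with 0.
  by rewrite addn0 (@pv_cat_eq p [:: 2] [:: 0; 1] i).
- change (nat_of_bool false) with 0; rewrite addn0 !pv_cat_ge; try lia.
  have -> : i - size p = (i - size p - 2).+2 by lia.
  by [].
- change (nat_of_bool true) with 1; by rewrite hi !pv_cat_ge // subSnn /= /lval /=.
Qed.

Lemma nth_le2 n r i : lvalid n r -> nth 0 r i <= 2.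
Proof.
move=> /lvalid_all ha; case: (ltnP i (size r)) => hi.
  by apply: (allP ha); apply: mem_nth.
by rewrite nth_default.
Qed.

Lemma bt_of_shift n r r' k : lvalid n r -> lvalid n r' -> shift r r' k ->
  bt n k = (nth 0 r k == 0) /\ nth 0 r k <= 1.
Proof.
move=> hv hv' sh.
have e1 := pv_nth r k; have e2 := pv_nth r' k.
have s1 := sh k; have s2 := sh k.+1; rewrite eqxx in s1.
have : (k.+1 == k) = false by apply/eqP; lia.
move=> hf; rewrite hf addn0 in s2. change (nat_of_bool true) with 1 in s1.
have b1 := pv_bound k hv; have b2 := pv_bound k hv'; have b3 := pv_bound k.+1 hv.
have d1 := nth_le2 k hv; have d2 := nth_le2 k hv'.
have := NN_rec n k; case: (bt n k) => /=; case: eqP => he; lia.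
Qed.

Lemma arc_to_shift n r r' : lvalid n r -> lvalid n r' ->
  (larc_s r r' -> exists k, 0 < k /\ bt n k /\ shift r r' k) /\
  (larc_d r r' -> exists k, 0 < k /\ ~~ bt n k /\ shift r r' k).
Proof.
move=> hv hv'; split.
- case=> [[p [q [E1 E2]]]|[p [E1 E2]]].
  + have sh : shift r r' (size p).+1 by rewrite E1 E2; apply: shift_mid.
    exists (size p).+1; split=> //; split=> //.
    have [-> _] := bt_of_shift hv hv' sh.
    by rewrite E1 nth_cat ltnNge leqnSn subSnn.
  + have sh : shift r r' (size p).+1 by rewrite E1 E2; apply: shift_lead.
    exists (size p).+1; split=> //; split=> //.
    have [-> _] := bt_of_shift hv hv' sh.
    by rewrite E1 nth_default // size_rcons.
- case=> [p [q [E1 E2]]].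
  have sh : shift r r' (size p).+1 by rewrite E1 E2; apply: shift_mid.
  exists (size p).+1; split=> //; split=> //.
  have [-> _] := bt_of_shift hv hv' sh.
  by rewrite E1 nth_cat ltnNge leqnSn subSnn.
Qed.

Lemma nzl_drop j s : nzl s -> nzl (drop j s).
Proof.
rewrite !nzl_nth; case/orP=> [/eqP ->|h]; first by rewrite drop_oversize.
case: (ltnP j (size s)) => hj; last by rewrite drop_oversize.
apply/orP; right; rewrite nth_drop size_drop.
have -> : j + (size s - j).-1 = (size s).-1 by lia.
by [].
Qed.

Lemma decomp3 (s : seq nat) k : 0 < k -> k < size s ->
  s = take k.-1 s ++ [:: nth 0 s k.-1, nth 0 s k & drop k.+1 s].
Proof.
move=> hk hs.
rewrite -{1}(cat_take_drop k.-1 s); congr (_ ++ _).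
rewrite (drop_nth 0 (_ : k.-1 < size s)); last by lia.
have -> : k.-1.+1 = k by lia.
by rewrite (drop_nth 0 hs).
Qed.

Lemma decomp2 (s : seq nat) k : 0 < k -> size s = k ->
  s = rcons (take k.-1 s) (nth 0 s k.-1).
Proof.
move=> hk hs.
rewrite -{1}(cat_take_drop k.-1 s) -cats1; congr (_ ++ _).
rewrite (drop_nth 0 (_ : k.-1 < size s)); last by lia.
have -> : k.-1.+1 = k by lia.
by rewrite drop_oversize ?hs.
Qed.

Lemma arc_of_shift n r r' k : lvalid n r -> lvalid n r' -> 0 < k -> shift r r' k ->
  (bt n k -> larc_s r r') /\ (~~ bt n k -> larc_d r r').
Proof.
move=> hv hv' hk sh.
have shf : forall i, i != k -> pv r' i = pv r i.
  by move=> i /negbTE hi; rewrite sh hi addn0.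
have dig : forall i, i != k.-1 -> i != k -> nth 0 r' i = nth 0 r i.
  move=> i h1 h2; have := pv_nth r i; have := pv_nth r' i.
  rewrite (shf i) // (shf i.+1); last by apply/eqP; lia.
  lia.
have dk : nth 0 r' k = nth 0 r k + 1.
  have := pv_nth r k; have := pv_nth r' k; have := sh k; rewrite eqxx.
  rewrite (shf k.+1); last by apply/eqP; lia.
  change (nat_of_bool true) with 1; lia.
have dk1 : nth 0 r k.-1 = 2 /\ nth 0 r' k.-1 = 0.
  have := pv_nth r k.-1; have := pv_nth r' k.-1; have := sh k.
  have -> : k.-1.+1 = k by lia.
  rewrite eqxx (shf k.-1); last by apply/eqP; lia.
  have := nth_le2 k.-1 hv; change (nat_of_bool true) with 1; lia.
have [hbt hr1] := bt_of_shift hv hv' sh.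
have szr : k <= size r.
  case: (ltnP k.-1 (size r)) => h; first by lia.
  by move: dk1; rewrite nth_default // => -[].
have szr' : k < size r'.
  case: (ltnP k (size r')) => h //.
  by move: dk; rewrite nth_default //; lia.
have eP : take k.-1 r' = take k.-1 r.
  apply: (@eq_from_nth _ 0); first by rewrite !size_take_min; lia.
  move=> i; rewrite size_take_min => hi.
  rewrite !nth_take; try lia; apply: dig; apply/eqP; lia.
have eQ : drop k.+1 r' = drop k.+1 r.
  apply: nth_inj_nzl; try apply: nzl_drop; try exact: lvalid_nzl hv'; try exact: lvalid_nzl hv.
  move=> i; rewrite !nth_drop; apply: dig; apply/eqP; lia.
have Er' := decomp3 hk szr'; rewrite eP eQ dk (proj2 dk1) in Er'.
split=> hb.
- have r0 : nth 0 r k = 0 by move: hbt; rewrite hb => /esym/eqP.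
  rewrite r0 in Er'.
  move: szr; rewrite leq_eqVlt => /orP [/eqP szr|szr].
  + right; exists (take k.-1 r); split.
    * by rewrite {1}(decomp2 hk (esym szr)) (proj1 dk1).
    * by rewrite Er' drop_oversize // -szr.
  + left; exists (take k.-1 r), (drop k.+1 r); split=> //.
    by rewrite {1}(decomp3 hk szr) (proj1 dk1) r0.
- have r1 : nth 0 r k = 1 by move: hbt hr1; rewrite (negbTE hb); case: (nth 0 r k) => [|[]].
  rewrite r1 in Er'.
  have szr2 : k < size r.
    case: (ltnP k (size r)) => h //; by move: r1; rewrite nth_default.
  exists (take k.-1 r), (drop k.+1 r); split=> //.
  by rewrite {1}(decomp3 hk szr2) (proj1 dk1) r1.
Qed.

Definition hh n := trunc_log 2 n.

Definition vset n (e : nat -> bool) : Prop :=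
  (forall k, e k -> 0 < k <= hh n) /\
  (forall k, 0 < k < hh n -> bt n k -> e k.+1 -> e k) /\
  (forall k, 0 < k < hh n -> ~~ bt n k -> e k -> e k.+1).

Definition remk (e : nat -> bool) k i := e i && (i != k).

Lemma hh_bounds n : 0 < n -> 2 ^ hh n <= n < 2 ^ (hh n).+1.
Proof. by move=> hn; have := trunc_log_bounds (isT : 1 < 2) hn. Qed.

Lemma NN_big n k : 0 < n -> hh n < k -> NN n k = 0.
Proof.
move=> hn hk; rewrite /NN divn_small //.
have /andP [_ h] := hh_bounds hn; apply: leq_trans h _; rewrite leq_exp2l //.
Qed.

Lemma NN_pos n k : 0 < n -> k <= hh n -> 0 < NN n k.
Proof.
move=> hn hk; rewrite /NN divn_gt0 ?expn_gt0 //.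
have /andP [h _] := hh_bounds hn; apply: leq_trans h; rewrite leq_exp2l //.
Qed.

Lemma NN_top n : 0 < n -> NN n (hh n) = 1.
Proof.
move=> hn; have := NN_pos hn (leqnn _); have /andP [_ h] := hh_bounds hn.
have : NN n (hh n) < 2 by rewrite /NN ltn_divLR ?expn_gt0 // -expnS.
lia.
Qed.

Lemma bt_top n : 0 < n -> bt n (hh n).
Proof. by move=> hn; rewrite /bt NN_top. Qed.

Lemma dfn_vset n r : 0 < n -> lvalid n r -> vset n (dfn n r).
Proof.
move=> hn hv; split; [|split].
- move=> k hk; case: (posnP k) => [k0|kp].
    by move: hk; rewrite k0 /dfn pv0 NN0 (lvalid_val hv) eqxx.
  case: (leqP k (hh n)) => // hk2.
  move: hk; rewrite /dfn NN_big //; have := pv_bound k hv; rewrite NN_big //.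
  by case: (pv r k).
- move=> k hk hb hd.
  have := pv_def k hv; have := pv_def k.+1 hv; have := NN_rec n k; have := pv_nth r k.
  have := nth_le2 k hv; rewrite hb hd /=.
  case: (dfn n r k) => //=; lia.
- move=> k hk hb hd.
  have := pv_def k hv; have := pv_def k.+1 hv; have := NN_rec n k; have := pv_nth r k.
  have := nth_le2 k hv; rewrite (negbTE hb) hd /=.
  case: (dfn n r k.+1) => //=; lia.
Qed.

Lemma shift_rem n r r' k : lvalid n r -> lvalid n r' ->
  shift r r' k <-> (dfn n r k /\ forall i, dfn n r' i = remk (dfn n r) k i).
Proof.
move=> hv hv'; rewrite /remk; split.
- move=> sh; have hk : dfn n r k.
    have := sh k; rewrite eqxx; have := pv_bound k hv'; rewrite /dfn.
    change (nat_of_bool true) with 1; case: eqP => // ->; lia.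
  split=> // i; case: (eqVneq i k) => [->|hik].
    rewrite andbF; apply/negbTE; rewrite negbK; move: hk; rewrite /dfn.
    have := sh k; rewrite eqxx; have := pv_bound k hv; have := pv_bound k hv'.
    change (nat_of_bool true) with 1; move=> b1 b2 e /eqP hk; apply/eqP; lia.
  rewrite andbT /dfn sh (negbTE hik) addn0 //.
- case=> hk he i; case: (eqVneq i k) => [->{i}|hik].
    have [p1 b1] := pv_def k hv; have [p2 b2] := pv_def k hv'.
    rewrite p1 p2 he eqxx andbF hk; rewrite hk in b1.
    change (nat_of_bool true) with 1 in b1 |- *; change (nat_of_bool false) with 0; lia.
  have [p1 b1] := pv_def i hv; have [p2 b2] := pv_def i hv'.
  by rewrite p1 p2 he hik andbT addn0.
Qed.

Lemma vset_real n e : 0 < n -> ~~ bt n 0 -> vset n e ->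
  exists r, lvalid n r /\ forall k, dfn n r k = e k.
Proof.
move=> hn hb0 [s1 [s2 s3]].
set h := hh n.
have hh1 : bt n h := bt_top hn.
have e0 : e 0 = false by apply/negP => /s1.
have eb : forall k, h < k -> e k = false by move=> k hk; apply/negP => /s1; lia.
pose f k := bt n k + (e k.+1).*2 - e k.
pose L := h.+1 - e h.
pose r := mkseq f L.
have Lpos : 0 < L by rewrite /L; case: (e h) (s1 h) => //=; lia.
have fle : forall k, k < L -> f k <= 2.
  move=> k hk; rewrite /f.
  case: (posnP k) => [->|kp]; first by rewrite (negbTE hb0) e0 /=; case: (e 1).
  case: (ltnP k h) => hkh.
    case E1: (e k.+1); case E2: (bt n k); case E3: (e k) => //=.
    by rewrite s2 in E3; lia.
  by rewrite (eb k.+1) //=; case: (bt n k); case: (e k).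
have key : forall k, k < L -> NN n k - e k = (NN n k.+1 - e k.+1).*2 + f k.
  move=> k hk; have := NN_rec n k; rewrite /f.
  have p1 : e k.+1 -> 0 < NN n k.+1.
    by move=> /s1 => h1; apply: NN_pos; lia.
  have p2 : e k -> ~~ e k.+1 -> bt n k.
    move=> ek nek; case: (posnP k) => [k0|kp]; first by rewrite k0 e0 in ek.
    case: (ltnP k h) => hkh.
      by apply/negP => nb; move: nek; rewrite (s3 k) //; lia.
    have kh : k = h by have := s1 k ek; lia.
    by rewrite kh.
  move=> hrec; case Ek: (e k); case Ek1: (e k.+1).
  - have := p1 Ek1; move: hrec; case: (bt n k) => /=; lia.
  - have := p2 Ek (negbT Ek1); move: hrec; case: (bt n k) => //=; lia.
  - have := p1 Ek1; move: hrec; case: (bt n k) => /=; lia.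
  - move: hrec; case: (bt n k) => /=; lia.
have pvr : forall k, pv r k = NN n k - e k.
  have big : forall k, L <= k -> NN n k - e k = 0.
    move=> k hk; case: (ltnP h k) => hkh; first by rewrite NN_big.
    have ehT : e h by move: hk; rewrite /L; case: (e h) => //=; lia.
    have kh : k = h by move: hk; rewrite /L ehT; lia.
    by rewrite kh NN_top // ehT.
  move=> k; move Ed: (L - k) => d; elim: d k Ed => [|d IH] k Ed.
    by rewrite big; [rewrite /pv drop_oversize // size_mkseq; lia | lia].
  have hk : k < L by lia.
  rewrite pv_nth nth_mkseq // IH; last by lia.
  by rewrite (key k hk).
exists r; split.
- apply/and3P; split.
  + apply/(all_nthP 0) => i; rewrite size_mkseq => hi; rewrite nth_mkseq //; exact: fle.
  + change (nzl r); rewrite nzl_nth size_mkseq; apply/orP; right; rewrite nth_mkseq; last by lia.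
    rewrite /f /L; case E: (e h) => /=.
      have -> : h.+1 - 1 = h by lia.
      have -> : h.-1.+1 = h by have := s1 h E; lia.
      by rewrite E; case: (bt n h.-1); case: (e h.-1).
    by rewrite E (eb h.+1) //= hh1.
  + by rewrite -pv0 pvr e0 subn0 NN0.
- move=> k; rewrite /dfn pvr; case E: (e k) => /=.
    have := NN_pos hn (_ : k <= h); have := s1 k E; lia.
  by rewrite subn0 eqxx.
Qed.

Definition vs (lam : nat -> bool) h (e : nat -> bool) : Prop :=
  (forall k, e k -> 0 < k <= h) /\
  (forall k, 0 < k < h -> lam k -> e k.+1 -> e k) /\
  (forall k, 0 < k < h -> ~~ lam k -> e k -> e k.+1).

Definition rm (e : nat -> bool) k i := e i && (i != k).

Definition leF (lam : nat -> bool) i j : bool :=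
  if i <= j then all lam (iota i (j - i)) else all (fun k => ~~ lam k) (iota j (i - j)).

Lemma leP_P lam i j : leF lam i j <->
  ((i <= j) /\ (forall l, i <= l < j -> lam l)) \/ ((j <= i) /\ (forall l, j <= l < i -> ~~ lam l)).
Proof.
rewrite /leF; case: (leqP i j) => hij.
- split.
  + move/allP=> h; left; split=> // l hl; apply: h; rewrite mem_iota; lia.
  + case=> [[_ h]|[hji h]]; apply/allP=> l; rewrite mem_iota=> hl; first by apply: h; lia.
    lia.
- split.
  + move/allP=> h; right; split; first by lia.
    move=> l hl; apply: h; rewrite mem_iota; lia.
  + case=> [[? _]|[_ h]]; first by lia.
    apply/allP=> l; rewrite mem_iota=> hl; apply: h; lia.
Qed.

Lemma leP_refl lam i : leF lam i i.
Proof. by rewrite /leF leqnn subnn. Qed.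

Lemma leP_up lam k : leF lam k k.+1 = lam k.
Proof. by rewrite /leF leqnSn subSnn /= andbT. Qed.

Lemma leP_down lam k : leF lam k.+1 k = ~~ lam k.
Proof. by rewrite /leF ltnn subSnn /= andbT. Qed.

Lemma leP_trans lam i j k : leF lam i j -> leF lam j k -> leF lam i k.
Proof.
move=> /leP_P h1 /leP_P h2; apply/leP_P.
case: h1 => [[a1 b1]|[a1 b1]]; case: h2 => [[a2 b2]|[a2 b2]].
- by left; split; [lia| move=> l hl; case: (ltnP l j) => hl2; [apply: b1|apply: b2]; lia].
- case: (leqP i k) => hik.
    by left; split=> // l hl; apply: b1; lia.
  by right; split; [lia|move=> l hl; apply: b2; lia].
- case: (eqVneq j i) => [eji|nji].
    by left; split; [lia|move=> l hl; apply: b2; lia].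
  case: (eqVneq j k) => [ejk|njk].
    by right; split; [lia|move=> l hl; apply: b1; lia].
  have := b1 j (_ : j <= j < i); have := b2 j (_ : j <= j < k).
  move=> H1 H2; exfalso; move: (H1 ltac:(lia)) (H2 ltac:(lia)) => ->.
  done.
- by right; split; [lia| move=> l hl; case: (ltnP l j) => hl2; [apply: b2|apply: b1]; lia].
Qed.

Lemma leP_antisym lam i j : leF lam i j -> leF lam j i -> i = j.
Proof.
move=> /leP_P h1 /leP_P h2.
case: h1 => [[a1 b1]|[a1 b1]]; case: h2 => [[a2 b2]|[a2 b2]]; try lia.
- case: (eqVneq i j) => // nij; have := b1 i; have := b2 i.
  move=> H2 H1; move: (H1 ltac:(lia)); rewrite (negbTE (H2 ltac:(lia))) //.
- case: (eqVneq i j) => // nij; have := b1 j; have := b2 j.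
  move=> H2 H1; move: (H2 ltac:(lia)); rewrite (negbTE (H1 ltac:(lia))) //.
Qed.

Definition DD lam h j i : bool := (0 < i <= h) && leF lam i j.

Lemma vs_DD lam h j : 0 < j <= h -> vs lam h (DD lam h j).
Proof.
move=> hj; split; [|split].
- by move=> k /andP [].
- move=> k hk hl /andP [_ h2]; apply/andP; split; first by lia.
  by apply: leP_trans h2; rewrite leP_up.
- move=> k hk hl /andP [_ h2]; apply/andP; split; first by lia.
  by apply: leP_trans h2; rewrite leP_down.
Qed.

Lemma vs_down lam h e i j : vs lam h e -> e j -> leF lam i j -> 0 < i <= h -> e i.
Proof.
move=> [s1 [s2 s3]] ej /leP_P [[a b]|[a b]] hi; have hj := s1 j ej.
- move Ed: (j - i) => d; elim: d i a b hi Ed => [|d IH] i a b hi Ed.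
    by have -> : i = j by lia.
  apply: (s2 i); [lia| apply: b; lia|].
  have hb : forall l, i.+1 <= l < j -> lam l by move=> l hl; apply: b; lia.
  exact: (IH i.+1 ltac:(lia) hb ltac:(lia) ltac:(lia)).
- move Ed: (i - j) => d; elim: d i a b hi Ed => [|d IH] i a b hi Ed.
    by have -> : i = j by lia.
  have -> : i = i.-1.+1 by lia.
  apply: (s3 i.-1); [lia| apply: b; lia|].
  have hb : forall l, j <= l < i.-1 -> ~~ lam l by move=> l hl; apply: b; lia.
  exact: (IH i.-1 ltac:(lia) hb ltac:(lia) ltac:(lia)).
Qed.

Lemma vs_rm lam h e t : vs lam h e -> e t ->
  (t < h -> lam t -> ~~ e t.+1) -> (1 < t -> ~~ lam t.-1 -> ~~ e t.-1) ->
  vs lam h (rm e t).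
Proof.
move=> [s1 [s2 s3]] et c1 c2; rewrite /rm; split; [|split].
- by move=> k /andP [/s1].
- move=> k hk hl /andP [ek nk]; apply/andP; split; first exact: s2.
  apply/eqP=> ekt; rewrite ekt in hk hl ek.
  by move: (c1 ltac:(lia) hl); rewrite ek.
- move=> k hk hl /andP [ek nk]; apply/andP; split; first exact: s3.
  apply/eqP=> ekt; have kt : k = t.-1 by lia.
  by move: (c2 ltac:(lia)); rewrite -kt hl ek => /(_ isT).
Qed.

Lemma vs_rm_inv lam h e t : vs lam h e -> e t -> vs lam h (rm e t) ->
  (t < h -> lam t -> ~~ e t.+1) /\ (1 < t -> ~~ lam t.-1 -> ~~ e t.-1).
Proof.
move=> [s1 _] et [_ [s2 s3]]; rewrite /rm in s2 s3; have := s1 t et => ht.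
split.
- move=> th lt; apply/negP=> et1.
  have := s2 t ltac:(lia) lt; rewrite et1 eqxx andbF.
  have -> : (t.+1 != t) by apply/eqP; lia.
  by move=> /(_ isT).
- move=> t1 lt; apply/negP=> et1.
  have := s3 t.-1 ltac:(lia) lt; rewrite et1.
  have -> : (t.-1 != t) by apply/eqP; lia.
  have -> : t.-1.+1 = t by lia.
  by rewrite eqxx andbF => /(_ isT).
Qed.

Lemma DD_rm lam h j k : 0 < j <= h -> DD lam h j k -> vs lam h (rm (DD lam h j) k) -> k = j.
Proof.
move=> hj hk hv; have [c1 c2] := vs_rm_inv (vs_DD lam hj) hk hv.
move: hk => /andP [hk /leP_P [[a b]|[a b]]].
- case: (eqVneq k j) => // nkj.
  have := c1 ltac:(lia) (b k ltac:(lia)); rewrite /DD.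
  have -> : leF lam k.+1 j by apply/leP_P; left; split; [lia|move=> l hl; apply: b; lia].
  by rewrite andbT; have -> : 0 < k.+1 <= h by lia.
- case: (eqVneq k j) => // nkj.
  have := c2 ltac:(lia) (b k.-1 ltac:(lia)); rewrite /DD.
  have -> : leF lam k.-1 j by apply/leP_P; right; split; [lia|move=> l hl; apply: b; lia].
  by rewrite andbT; have -> : 0 < k.-1 <= h by lia.
Qed.

Lemma walk lam h e i : vs lam h e -> e i ->
  exists t, [/\ e t, vs lam h (rm e t) & leF lam i t].
Proof.
move=> hv ei; have [s1 [s2 s3]] := hv.
have WR : forall t, i < t -> e t -> (forall l, i <= l < t -> lam l) ->
    exists t', [/\ e t', vs lam h (rm e t') & leF lam i t'].
  move=> t; move Ed: (h - t) => d; elim: d t Ed => [|d IH] t Ed it et hl.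
    exists t; split=> //; last by apply/leP_P; left; split; [lia|].
    apply: vs_rm => //; first by move=> ?; lia.
    by move=> _; rewrite hl //; lia.
  case E: [&& t < h, lam t & e t.+1].
    move/and3P: E => [th lt et1]; apply: (IH t.+1) => //; try lia.
    by move=> l hl2; case: (ltnP l t) => hlt; [apply: hl; lia| have -> : l = t by lia].
  exists t; split=> //; last by apply/leP_P; left; split; [lia|].
  apply: vs_rm => //.
    by move=> th lt; apply/negP=> et1; move: E; rewrite th lt et1.
  by move=> _; rewrite hl //; lia.
have WL : forall t, t < i -> e t -> (forall l, t <= l < i -> ~~ lam l) ->
    exists t', [/\ e t', vs lam h (rm e t') & leF lam i t'].
  move=> t; elim: t => [|t IH] it et hl.
    by have := s1 0 et.
  case E: [&& 1 < t.+1, ~~ lam t & e t].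
    move/and3P: E => [t1 lt et1]; apply: IH => //; try lia.
    by move=> l hl2; case: (ltnP l t.+1) => hlt; [have -> : l = t by lia|apply: hl; lia].
  exists t.+1; split=> //; last by apply/leP_P; right; split; [lia|].
  apply: vs_rm => //.
    by move=> _ lt; move: (hl t.+1 ltac:(lia)); rewrite lt.
  by move=> t1 lt; apply/negP=> et1; move: E; rewrite t1 lt et1.
case E1: [&& i < h, lam i & e i.+1].
  move/and3P: E1 => [ih li ei1]; apply: (WR i.+1) => //.
  by move=> l hl; have -> : l = i by lia.
case E2: [&& 1 < i, ~~ lam i.-1 & e i.-1].
  move/and3P: E2 => [i1 li ei1]; apply: (WL i.-1) => //; first by lia.
  by move=> l hl; have -> : l = i.-1 by lia.
exists i; split=> //; last exact: leP_refl.
apply: vs_rm => //.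
  by move=> ih li; apply/negP=> ei1; move: E1; rewrite ih li ei1.
by move=> i1 li; apply/negP=> ei1; move: E2; rewrite i1 li ei1.
Qed.

Lemma JI_DD lam h e j : vs lam h e -> e j -> vs lam h (rm e j) ->
  (forall k, e k -> vs lam h (rm e k) -> k = j) -> forall i, e i = DD lam h j i.
Proof.
move=> hv ej hr uniq i; have [s1 _] := hv.
apply/idP/idP.
- move=> ei; have [t [et vt lit]] := walk hv ei.
  by rewrite /DD s1 //= -(uniq t et vt).
- by move=> /andP [hi hl]; apply: (vs_down hv ej hl hi).
Qed.

Lemma diff_rm lam h e1 e2 i : vs lam h e1 -> vs lam h e2 -> (forall k, e2 k -> e1 k) ->
  e1 i -> ~~ e2 i -> exists t, [/\ e1 t, vs lam h (rm e1 t) & ~~ e2 t].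
Proof.
move=> v1 v2 sub e1i ne2i; have [t [et vt lit]] := walk v1 e1i.
exists t; split=> //; apply/negP=> e2t.
have [s1 _] := v1.
by move: ne2i; rewrite (vs_down v2 e2t lit (s1 i e1i)).
Qed.

Lemma count_lt (T : eqType) (p q : pred T) (s : seq T) :
  (forall x, p x -> q x) -> (exists2 x, x \in s & q x && ~~ p x) -> count p s < count q s.
Proof.
move=> pq [x]; elim: s => [|y s IH] //=; rewrite in_cons.
have cle : forall s', count p s' <= count q s'.
  by move=> s'; apply: sub_count.
case/orP=> [/eqP <-|xs] /andP [qx npx].
  by rewrite qx (negbTE npx) add0n add1n ltnS cle.
have := IH xs; rewrite qx npx => /(_ isT) h.
case E: (p y); first by rewrite (pq y E); lia.
by case: (q y) => /=; lia.
Qed.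

Definition garc (r r' : seq nat) := larc_s r r' \/ larc_d r r'.
Definition JI n r := lvalid n r /\
  exists r1, [/\ lvalid n r1, garc r r1 & forall r2, lvalid n r2 -> garc r r2 -> r2 = r1].
Definition hasS n r := exists r1, lvalid n r1 /\ larc_s r r1.
Inductive reach n : seq nat -> seq nat -> Prop :=
 | reach_refl r : lvalid n r -> reach n r r
 | reach_step r r1 r2 : lvalid n r -> lvalid n r1 -> garc r r1 -> reach n r1 r2 -> reach n r r2.

Lemma vs_ext lam h e e' : (forall i, e i = e' i) -> vs lam h e -> vs lam h e'.
Proof.
move=> he [s1 [s2 s3]]; split; [|split].
- by move=> k; rewrite -he; apply: s1.
- by move=> k hk hl; rewrite -!he; apply: s2.
- by move=> k hk hl; rewrite -!he; apply: s3.
Qed.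


Lemma B1 n r r' : 0 < n -> lvalid n r -> lvalid n r' -> garc r r' ->
  exists k, [/\ dfn n r k, forall i, dfn n r' i = rm (dfn n r) k i,
     vs (bt n) (hh n) (rm (dfn n r) k) & (larc_s r r' -> bt n k)].
Proof.
move=> hn hv hv' ha; have [A1 A2] := arc_to_shift hv hv'.
have fin : forall k, shift r r' k -> [/\ dfn n r k,
     forall i, dfn n r' i = rm (dfn n r) k i & vs (bt n) (hh n) (rm (dfn n r) k)].
  move=> k sh; have [h1 h2] := (shift_rem k hv hv').1 sh.
  split=> //.
  exact: (vs_ext h2 (dfn_vset hn hv')).
case: ha => [hs|hd].
- have [k [_ [bk sh]]] := A1 hs; have [a b c] := fin k sh.
  by exists k; split=> // _.
- have [k [_ [bk sh]]] := A2 hd; have [a b c] := fin k sh.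
  exists k; split=> // hs.
  have [k' [_ [bk' sh']]] := A1 hs.
  have e : k' = k.
    have [_ e1] := (shift_rem k hv hv').1 sh; have [a' e2] := (shift_rem k' hv hv').1 sh'.
    have := e1 k; rewrite e2 /remk eqxx andbF a /=; case: eqP => //.
  by rewrite -e.
Qed.

Lemma B2 n r r' k : 0 < n -> lvalid n r -> lvalid n r' -> dfn n r k ->
  (forall i, dfn n r' i = rm (dfn n r) k i) ->
  (bt n k -> larc_s r r') /\ (~~ bt n k -> larc_d r r').
Proof.
move=> hn hv hv' hk he.
have kp : 0 < k by have [s1 _] := dfn_vset hn hv; have := s1 k hk; lia.
apply: (arc_of_shift hv hv' kp).
by apply/(shift_rem k hv hv').
Qed.

Lemma B2a n r r' k : 0 < n -> lvalid n r -> lvalid n r' -> dfn n r k ->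
  (forall i, dfn n r' i = rm (dfn n r) k i) -> garc r r'.
Proof.
move=> hn hv hv' hk he; have [h1 h2] := B2 hn hv hv' hk he.
by case E: (bt n k); [left; apply: h1|right; apply: h2; rewrite E].
Qed.

Lemma B3 n e : 0 < n -> ~~ bt n 0 -> vs (bt n) (hh n) e ->
  exists r, lvalid n r /\ forall k, dfn n r k = e k.
Proof. by move=> hn hb he; apply: vset_real. Qed.

Lemma M1 n j r : 0 < n -> ~~ bt n 0 -> 0 < j <= hh n -> lvalid n r ->
  (forall i, dfn n r i = DD (bt n) (hh n) j i) ->
  JI n r /\ (hasS n r <-> bt n j).
Proof.
move=> hn hb hj hv hD.
have vr := dfn_vset hn hv.
have dj : dfn n r j by rewrite hD /DD hj leP_refl.
have vrm : vs (bt n) (hh n) (rm (dfn n r) j).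
  apply: vs_rm => //.
    by move=> _ lj; rewrite hD /DD leP_down lj andbF.
  move=> _ lj; rewrite hD /DD.
  have E : leF (bt n) j.-1 j = bt n j.-1.
    by rewrite -{2}(@prednK j) ?leP_up //; lia.
  by rewrite E (negbTE lj) andbF.
have [r1 [hv1 he1]] := B3 hn hb vrm.
have uniqk : forall k, dfn n r k -> vs (bt n) (hh n) (rm (dfn n r) k) -> k = j.
  move=> k hk hvk; apply: (@DD_rm (bt n) (hh n) j k hj); first by rewrite -hD.
  apply: (vs_ext _ hvk) => i; by rewrite /rm hD.
split; first split=> //.
- exists r1; split=> //; first by apply: (B2a hn hv hv1 dj he1).
  move=> r2 hv2 ha; have [k [a b c _]] := B1 hn hv hv2 ha.
  have kj := uniqk k a c; subst k.
  by apply: (dfn_inj hv2 hv1) => i; rewrite b he1.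
- split.
  + case=> r2 [hv2 hs]; have [k [a b c d]] := B1 hn hv hv2 (or_introl hs).
    by rewrite -(uniqk k a c); apply: d.
  + move=> bj; exists r1; split=> //; exact: (proj1 (B2 hn hv hv1 dj he1) bj).
Qed.

Lemma M2 n r : 0 < n -> ~~ bt n 0 -> JI n r ->
  exists j, 0 < j <= hh n /\ forall i, dfn n r i = DD (bt n) (hh n) j i.
Proof.
move=> hn hb [hv [r1 [hv1 ha uniq]]].
have vr := dfn_vset hn hv.
have [k [a b c _]] := B1 hn hv hv1 ha.
exists k; split; first by have [s1 _] := vr; apply: s1.
apply: JI_DD => // k' hk' hvk'.
have [r2 [hv2 he2]] := B3 hn hb hvk'.
have e21 := uniq r2 hv2 (B2a hn hv hv2 hk' he2); subst r2.
have := he2 k'; rewrite b /rm eqxx andbF hk' /=.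
by case: eqP.
Qed.

Lemma reach_sub n r r' : reach n r r' -> 0 < n -> forall i, dfn n r' i -> dfn n r i.
Proof.
elim=> [r0 _ //| r0 r1 r2 hv hv1 ha _ IH] hn i h2.
have [k [a b _ _]] := B1 hn hv hv1 ha.
by have := IH hn i h2; rewrite b /rm => /andP [].
Qed.

Lemma reach_step_lem n r r' : 0 < n -> ~~ bt n 0 -> lvalid n r -> lvalid n r' ->
  (forall i, dfn n r' i -> dfn n r i) ->
  has (fun i => dfn n r i && ~~ dfn n r' i) (iota 1 (hh n)) ->
  exists r1, [/\ lvalid n r1, garc r r1,
    count (dfn n r1) (iota 1 (hh n)) < count (dfn n r) (iota 1 (hh n)) &
    forall i, dfn n r' i -> dfn n r1 i].
Proof.
move=> hn hb hv hv' hsub /hasP [i hi /andP [d1 d2]].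
have vr := dfn_vset hn hv; have vr' := dfn_vset hn hv'.
have [t [dt vt nt]] := diff_rm vr vr' hsub d1 d2.
have [r1 [hv1 he1]] := B3 hn hb vt.
exists r1; split=> //.
- exact: (B2a hn hv hv1 dt he1).
- apply: count_lt.
    by move=> x; rewrite he1 /rm => /andP [].
  exists t; first by have [s1 _] := vr; have := s1 t dt; rewrite mem_iota; lia.
  by rewrite dt he1 /rm eqxx andbF.
- move=> x hx; rewrite he1 /rm hsub //=; apply/eqP=> ext.
  by move: nt; rewrite -ext hx.
Qed.

Lemma reach_of_sub n r r' : 0 < n -> ~~ bt n 0 -> lvalid n r -> lvalid n r' ->
  (forall i, dfn n r' i -> dfn n r i) -> reach n r r'.
Proof.
move=> hn hb hv hv' hsub.
have main : forall c r, lvalid n r -> count (dfn n r) (iota 1 (hh n)) <= c ->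
   (forall i, dfn n r' i -> dfn n r i) -> reach n r r'.
  elim=> [|c IH] r0 hv0 hc hs0;
   (case E: (has (fun i => dfn n r0 i && ~~ dfn n r' i) (iota 1 (hh n)));
    [have [r1 [hv1 ha hlt hs1]] := reach_step_lem hn hb hv0 hv' hs0 E|]).
  - by move: hlt; lia.
  - have -> : r0 = r' ; last by apply: reach_refl.
    apply: (dfn_inj hv0 hv') => i; apply/idP/idP; last exact: hs0.
    move=> di; case E2: (dfn n r' i) => //; exfalso; move/negP: E; apply; apply/hasP; exists i.
      by have [s1 _] := dfn_vset hn hv0; have := s1 i di; rewrite mem_iota; lia.
    by rewrite di E2.
  - apply: (reach_step hv0 hv1 ha); apply: IH => //; lia.
  - have -> : r0 = r' ; last by apply: reach_refl.
    apply: (dfn_inj hv0 hv') => i; apply/idP/idP; last exact: hs0.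
    move=> di; case E2: (dfn n r' i) => //; exfalso; move/negP: E; apply; apply/hasP; exists i.
      by have [s1 _] := dfn_vset hn hv0; have := s1 i di; rewrite mem_iota; lia.
    by rewrite di E2.
exact: (main _ r hv (leqnn _) hsub).
Qed.

Lemma M3 n j k rj rk : 0 < n -> ~~ bt n 0 -> 0 < j <= hh n -> 0 < k <= hh n ->
  lvalid n rj -> lvalid n rk ->
  (forall i, dfn n rj i = DD (bt n) (hh n) j i) ->
  (forall i, dfn n rk i = DD (bt n) (hh n) k i) ->
  reach n rk rj <-> leF (bt n) j k.
Proof.
move=> hn hb hj hk hvj hvk hDj hDk; split.
- move=> hr; have := reach_sub hr hn (i := j); rewrite hDj hDk /DD leP_refl hj /=.
  by move=> /(_ isT).
- move=> hl; apply: reach_of_sub => // i; rewrite hDj hDk /DD => /andP [-> hij] /=.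
  exact: leP_trans hij hl.
Qed.

Definition cov lam h i j := [/\ leF lam i j, i <> j &
  forall k, 0 < k <= h -> leF lam i k -> leF lam k j -> k = i \/ k = j].

Lemma leP_between lam a b k : leF lam a k -> leF lam k b ->
  (a <= k <= b) \/ (b <= k <= a).
Proof.
move=> /leP_P h1 /leP_P h2.
case: h1 => [[a1 b1]|[a1 b1]]; case: h2 => [[a2 b2]|[a2 b2]]; try lia.
- case: (eqVneq k a) => [ea|nka]; first by right; lia.
  case: (eqVneq k b) => [eb|nkb]; first by left; lia.
  by move: (b1 k.-1 ltac:(lia)); rewrite (negbTE (b2 k.-1 ltac:(lia))).
- case: (eqVneq k a) => [ea|nka]; first by left; lia.
  case: (eqVneq k b) => [eb|nkb]; first by right; lia.
  by move: (b2 k ltac:(lia)); rewrite (negbTE (b1 k ltac:(lia))).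
Qed.

Lemma adj_cov lam h i : 0 < i -> i < h ->
  cov lam h i i.+1 \/ cov lam h i.+1 i.
Proof.
move=> hi ih; case E: (lam i).
- left; split; [by rewrite leP_up| lia|].
  by move=> k _ h1 h2; have := leP_between h1 h2; lia.
- right; split; [by rewrite leP_down E| lia|].
  by move=> k _ h1 h2; have := leP_between h1 h2; lia.
Qed.

Lemma cov_adj lam h i j : 0 < i <= h -> 0 < j <= h -> cov lam h i j ->
  j = i.+1 \/ i = j.+1.
Proof.
move=> hi hj [l nij c].
move/leP_P: l => [[a b]|[a b]].
- case: (eqVneq j i.+1) => [->|nj]; [by left|exfalso].
  have := c i.+1 ltac:(lia); rewrite leP_up b; last by lia.
  have -> : leF lam i.+1 j by apply/leP_P; left; split; [lia|move=> l hl; apply: b; lia].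
  by move=> /(_ isT isT); lia.
- case: (eqVneq i j.+1) => [->|nj]; [by right|exfalso].
  have := c i.-1 ltac:(lia).
  have -> : leF lam i i.-1.
    by rewrite -{1}(@prednK i) ?leP_down; [apply: b; lia|lia].
  have -> : leF lam i.-1 j by apply/leP_P; right; split; [lia|move=> l hl; apply: b; lia].
  by move=> /(_ isT isT); lia.
Qed.

Lemma fence_iso (lam lam' : nat -> bool) h h' (f : nat -> nat) :
 0 < h -> 0 < h' -> lam h -> lam' h' ->
 (forall j, 0 < j <= h -> 0 < f j <= h') ->
 (forall k, 0 < k <= h' -> exists2 j, 0 < j <= h & f j = k) ->
 (forall i j, 0 < i <= h -> 0 < j <= h -> leF lam i j = leF lam' (f i) (f j)) ->
 (forall j, 0 < j <= h -> lam j = lam' (f j)) ->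
 h = h' /\ forall j, 0 < j <= h -> lam j = lam' j.
Proof.
move=> h0 h0' lh lh' fr fs fo fl.
have finj : forall i j, 0 < i <= h -> 0 < j <= h -> f i = f j -> i = j.
  move=> i j hi hj e; apply: (leP_antisym (lam := lam)).
    by rewrite fo // e leP_refl.
  by rewrite fo // e leP_refl.
have fadj : forall j, 0 < j -> j < h -> f j.+1 = (f j).+1 \/ f j = (f j.+1).+1.
  move=> j hj jh; have hj1 : 0 < j <= h by lia.
  have hj2 : 0 < j.+1 <= h by lia.
  have covf : forall a b, 0 < a <= h -> 0 < b <= h -> cov lam h a b -> cov lam' h' (f a) (f b).
    move=> a b ha hb [l n c]; split.
    - by rewrite -fo.
    - by move=> e; apply: n; apply: finj.
    - move=> k' hk' l1 l2; have [k hk ek] := fs k' hk'; subst k'.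
      rewrite -!fo // in l1 l2; case: (c k hk l1 l2) => ->; [by left|by right].
  case: (adj_cov lam hj jh) => hc.
  - by have := cov_adj (fr _ hj1) (fr _ hj2) (covf _ _ hj1 hj2 hc); lia.
  - by have := cov_adj (fr _ hj2) (fr _ hj1) (covf _ _ hj2 hj1 hc); lia.
have [hid|hrev] : (forall j, 0 < j <= h -> f j = j) \/
                  (h = h' /\ forall j, 0 < j <= h -> f j = h.+1 - j).
  case: (eqVneq h 1) => [h1|hn1].
    left=> j hj; have ej : j = 1 by lia.
    have [j1 hj1 e1] := fs 1 ltac:(lia); have [j2 hj2 e2] := fs h' ltac:(lia).
    have ej1 : j1 = 1 by lia. by subst j j1.
  have hf1 := fr 1 ltac:(lia).
  case: (fadj 1 isT ltac:(lia)) => hstart.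
  + have step : forall j, 0 < j -> j < h -> f j.+1 = (f j).+1.
      elim=> [//|j IH] hj jh; case: (posnP j) => [j0|jp]; first by subst j.
      have e1 := IH jp ltac:(lia).
      case: (fadj j.+1 isT jh) => // e2; exfalso.
      have := finj j.+2 j ltac:(lia) ltac:(lia) ltac:(lia); lia.
    have inc : forall j, 0 < j <= h -> f j = f 1 + j.-1.
      elim=> [//|j IH] hj; case: (posnP j) => [->|jp]; first by rewrite addn0.
      rewrite step //; try lia; rewrite IH; lia.
    left=> j hj; have [j1 hj1 e1] := fs 1 ltac:(lia).
    rewrite inc // in e1; rewrite inc //; lia.
  + have step : forall j, 0 < j -> j < h -> f j = (f j.+1).+1.
      elim=> [//|j IH] hj jh; case: (posnP j) => [j0|jp]; first by subst j.
      have e1 := IH jp ltac:(lia).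
      case: (fadj j.+1 isT jh) => // e2; exfalso.
      have := finj j.+2 j ltac:(lia) ltac:(lia) ltac:(lia); lia.
    have dec : forall j, 0 < j <= h -> f j + j.-1 = f 1.
      elim=> [//|j IH] hj; case: (posnP j) => [->|jp]; first by rewrite addn0.
      have := step j jp ltac:(lia); have := IH ltac:(lia); lia.
    right; have [j1 hj1 e1] := fs h' ltac:(lia); have [j2 hj2 e2] := fs 1 ltac:(lia).
    have d1 := dec j1 hj1; have d2 := dec j2 hj2; have d3 := dec h ltac:(lia).
    have fh := fr h ltac:(lia).
    have hh' : h = h' by lia.
    split=> // j hj; have := dec j hj; lia.
- have hh' : h = h'.
    have [j1 hj1 e1] := fs h' ltac:(lia); rewrite hid // in e1.
    have := fr h ltac:(lia); rewrite hid //; lia.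
  by split=> // j hj; rewrite fl // hid.
- case: hrev => hh' hf; split=> //.
  have altl : forall j, 0 < j -> j < h -> lam j = ~~ lam j.+1.
    move=> j hj jh; have := fo j j.+1 ltac:(lia) ltac:(lia).
    rewrite leP_up !hf; try lia.
    have -> : h.+1 - j = (h.+1 - j.+1).+1 by lia.
    rewrite leP_down => ->; rewrite (fl j.+1) ?hf //; lia.
  have lam'E : forall k, 0 < k <= h -> lam' k = lam (h.+1 - k).
    move=> k hk; rewrite fl ?hf; try lia.
    by have -> : h.+1 - (h.+1 - k) = k by lia.
  move=> j hj; move Ed: (h - j) => d; elim: d j hj Ed => [|d IH] j hj Ed.
    have -> : j = h by lia.
    by rewrite lh hh'.
  rewrite altl; try lia; rewrite IH; try lia.
  rewrite !lam'E; try lia.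
  have -> : h.+1 - j = (h.+1 - j.+1).+1 by lia.
  rewrite (altl (h.+1 - j.+1)) ?negbK //; lia.
Qed.

Definition liso m n (psi : seq nat -> seq nat) :=
 [/\ forall r, lvalid m r -> lvalid n (psi r),
     forall r', lvalid n r' -> exists2 r, lvalid m r & psi r = r',
     forall r1 r2, lvalid m r1 -> lvalid m r2 -> psi r1 = psi r2 -> r1 = r2 &
     forall r1 r2, lvalid m r1 -> lvalid m r2 ->
        (larc_s r1 r2 <-> larc_s (psi r1) (psi r2)) /\ (larc_d r1 r2 <-> larc_d (psi r1) (psi r2))].

Lemma liso_of_A m n : A_isomorphic m n -> exists psi, liso m n psi.
Proof.
case=> phi [bphi harc].
pose psi r := if (insub (rev r) : option (H m)) is Some x then rev (val (phi x)) else r.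
have spec : forall r, lvalid m r -> exists u : H m, val u = rev r /\ psi r = rev (val (phi u)).
  move=> r hv; rewrite /psi; case: insubP => [u _ eu|].
    by exists u.
  by rewrite hb_rev hv.
exists psi; split.
- by move=> r hv; have [u [_ ->]] := spec r hv; apply: valx.
- move=> r' hv'; have [g phig gphi] := bphi.
  pose y := mkH hv'; exists (rev (val (g y))); first exact: valx.
  have [u [eu ->]] := spec _ (valx (g y)).
  have -> : u = g y by apply: val_inj; rewrite eu revK.
  by rewrite gphi /= revK.
- move=> r1 r2 h1 h2; have [u1 [e1 ->]] := spec r1 h1; have [u2 [e2 ->]] := spec r2 h2.
  move=> /(congr1 rev); rewrite !revK => /val_inj /(bij_inj bphi) e.
  by rewrite -(revK r1) -(revK r2) -e1 -e2 e.
- move=> r1 r2 h1 h2; have [u1 [e1 ->]] := spec r1 h1; have [u2 [e2 ->]] := spec r2 h2.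
  have [a1 a2] := harc u1 u2.
  rewrite arc_single_rev arc_double_rev e1 e2 !revK in a1 a2.
  rewrite arc_single_rev arc_double_rev in a1 a2.
  by [].
Qed.

Lemma arc_tr m n psi r1 r2 : liso m n psi -> lvalid m r1 -> lvalid m r2 ->
  garc r1 r2 <-> garc (psi r1) (psi r2).
Proof.
case=> _ _ _ ha h1 h2; have [a b] := ha r1 r2 h1 h2.
rewrite /garc a b //.
Qed.

Lemma JI_tr m n psi r : liso m n psi -> lvalid m r -> JI m r <-> JI n (psi r).
Proof.
move=> L hv; have [v s i _] := L; split.
- case=> _ [r1 [hv1 ha hu]]; split; first exact: v.
  exists (psi r1); split; [exact: v|by apply/(arc_tr L hv hv1)|].
  move=> r2' hv2'; have [r2 hv2 <-] := s r2' hv2'.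
  by move=> /(arc_tr L hv hv2) /(hu r2 hv2) ->.
- case=> _ [r1' [hv1' ha hu]]; split=> //.
  have [r1 hv1 e1] := s r1' hv1'; subst r1'.
  exists r1; split=> //; first by apply/(arc_tr L hv hv1).
  move=> r2 hv2 /(arc_tr L hv hv2) a2; apply: i => //.
  exact: hu (v _ hv2) a2.
Qed.

Lemma hasS_tr m n psi r : liso m n psi -> lvalid m r -> hasS m r <-> hasS n (psi r).
Proof.
move=> L hv; have [v s i ha] := L; split.
- case=> r1 [hv1 a]; exists (psi r1); split; first exact: v.
  by apply/(ha r r1 hv hv1).1.
- case=> r1' [hv1' a]; have [r1 hv1 e1] := s r1' hv1'; subst r1'.
  by exists r1; split=> //; apply/(ha r r1 hv hv1).1.
Qed.

Lemma reach_tr m n psi r1 r2 : liso m n psi -> lvalid m r1 -> lvalid m r2 ->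
  reach m r1 r2 <-> reach n (psi r1) (psi r2).
Proof.
move=> L; have [v s i _] := L; move=> h1 h2; split.
- elim=> [r0 hv0|r0 r3 r4 hv0 hv3 ha _ IH]; first by apply: reach_refl; apply: v.
  apply: (reach_step (v _ hv0) (v _ hv3)) => //; exact/(arc_tr L hv0 hv3).
- move E1: (psi r1) => x1; move E2: (psi r2) => x2 hr.
  elim: hr r1 h1 E1 E2 => [x hx|x x' x'' hx hx' ha _ IH] r0 h0 E0 E3.
    by rewrite -E3 in E0; rewrite (i _ _ h0 h2 E0); apply: reach_refl.
  have [r' hr' e'] := s x' hx'; subst x x'.
  apply: (reach_step h0 hr') => //; first by apply/(arc_tr L h0 hr').
  exact: IH.
Qed.

Lemma lval_pos s : nzl s -> s != [::] -> 0 < lval s.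
Proof.
elim: s => [//|x s IH] hz _; case: s IH hz => [|y s] IH hz.
  by move: hz; rewrite /nzl /lval /=; lia.
have := IH hz isT; rewrite [lval (x :: _)]lval_cons; lia.
Qed.

Lemma lvalid0 r : lvalid 0 r -> r = [::].
Proof.
move=> hv; case: (eqVneq r [::]) => // nr.
by have := lval_pos (lvalid_nzl hv) nr; rewrite (lvalid_val hv).
Qed.

Lemma no_arc_nil x : ~ garc [::] x.
Proof.
case=> [[[p [q [E _]]]|[p [E _]]]|[p [q [E _]]]].
- by case: p E.
- by case: p E.
- by case: p E.
Qed.

Lemma noJI0 r : ~ JI 0 r.
Proof. by case=> /lvalid0 -> [r1 [_ /no_arc_nil]]. Qed.

Lemma bt0 n : bt n 0 = odd n.
Proof. by rewrite /bt NN0. Qed.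

Lemma hh_pos n : 0 < n -> ~~ odd n -> 0 < hh n.
Proof.
move=> hn ho; have /andP [_ h] := hh_bounds hn.
case: (posnP (hh n)) => // e; rewrite e expn1 in h.
have e1 : n = 1 by lia.
by rewrite e1 in ho.
Qed.

Lemma exists_DD n j : 0 < n -> ~~ odd n -> 0 < j <= hh n ->
  exists r, lvalid n r /\ forall i, dfn n r i = DD (bt n) (hh n) j i.
Proof. by move=> hn ho hj; apply: B3 => //; [rewrite bt0 | apply: vs_DD]. Qed.

Lemma DD_inj lam h j k : 0 < j <= h -> 0 < k <= h ->
  (forall i, DD lam h j i = DD lam h k i) -> j = k.
Proof.
move=> hj hk he; apply: (leP_antisym (lam := lam)).
  by have := he j; rewrite /DD hj leP_refl /= => /esym.
by have := he k; rewrite /DD hk leP_refl /= => ->.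
Qed.

Lemma bits_eq m n : 0 < m -> 0 < n -> hh m = hh n -> bt m 0 = bt n 0 ->
  (forall j, 0 < j <= hh m -> bt m j = bt n j) -> m = n.
Proof.
move=> hm hn eh b0 hb.
have key : forall d k, hh m - k = d -> k <= (hh m).+1 -> NN m k = NN n k.
  elim=> [|d IH] k Ed hk.
    case: (eqVneq k (hh m).+1) => [->|nk].
      by rewrite !NN_big // -eh.
    have -> : k = hh m by lia.
    by rewrite NN_top // eh NN_top.
  rewrite (NN_rec m k) (NN_rec n k) IH; try lia.
  case: (posnP k) => [->|kp]; first by rewrite b0.
  by rewrite hb //; lia.
by rewrite -(NN0 m) -(NN0 n); apply: (key (hh m)); lia.
Qed.

Lemma even_eq m n psi : ~~ odd m -> ~~ odd n -> liso m n psi -> m = n.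
Proof.
move=> om on L; have [v s i _] := L.
case: (posnP m) => [m0|mp]; case: (posnP n) => [n0|np].
- by rewrite m0 n0.
- exfalso; have h1 : 0 < 1 <= hh n by have := hh_pos np on; lia.
  have [r [hr hD]] := exists_DD np on h1.
  have [r0 hr0 e0] := s r hr; subst r.
  have [hJ _] := M1 np ltac:(by rewrite bt0) h1 hr hD.
  have := (JI_tr L hr0).2 hJ; rewrite m0; exact: noJI0.
- exfalso; have h1 : 0 < 1 <= hh m by have := hh_pos mp om; lia.
  have [r [hr hD]] := exists_DD mp om h1.
  have [hJ _] := M1 mp ltac:(by rewrite bt0) h1 hr hD.
  have := (JI_tr L hr).1 hJ; rewrite n0; exact: noJI0.
have bm0 : ~~ bt m 0 by rewrite bt0.
have bn0 : ~~ bt n 0 by rewrite bt0.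
set h := hh m; set h' := hh n.
have hp : 0 < h := hh_pos mp om.
have hp' : 0 < h' := hh_pos np on.
pose Q j k := 0 < k <= h' /\ exists r, [/\ lvalid m r, (forall x, dfn m r x = DD (bt m) h j x)
   & (forall x, dfn n (psi r) x = DD (bt n) h' k x)].
have Ex : forall j, 0 < j <= h -> exists k, Q j k.
  move=> j hj; have [r [hr hD]] := exists_DD mp om hj.
  have [hJ _] := M1 mp bm0 hj hr hD.
  have [k [hk hDk]] := M2 np bn0 ((JI_tr L hr).1 hJ).
  by exists k; split=> //; exists r.
pose f j := epsilon (inhabits 0) (Q j).
have fQ : forall j, 0 < j <= h -> Q j (f j).
  by move=> j hj; apply: epsilon_spec; apply: Ex.
have [eh hb] : h = h' /\ forall j, 0 < j <= h -> bt m j = bt n j.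
  apply: (@fence_iso (bt m) (bt n) h h' f) => //.
  - exact: bt_top.
  - exact: bt_top.
  - by move=> j /fQ [].
  - move=> k hk; have [r' [hr' hD']] := exists_DD np on hk.
    have [r hr e] := s r' hr'; subst r'.
    have [hJ _] := M1 np bn0 hk hr' hD'.
    have [j [hj hDj]] := M2 mp bm0 ((JI_tr L hr).2 hJ).
    exists j => //; have [hfk [r0 [hr0 hD0 hD0']]] := fQ j hj.
    have e0 : r0 = r by apply: (dfn_inj hr0 hr) => x; rewrite hD0 hDj.
    subst r0; apply: (@DD_inj (bt n) h' (f j) k hfk hk) => x; by rewrite -hD0' hD'.
  - move=> a b ha hb.
    have [hfa [ra [hra hDa hDa']]] := fQ a ha.
    have [hfb [rb [hrb hDb hDb']]] := fQ b hb.
    apply/idP/idP.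
    + move=> /(M3 mp bm0 ha hb hra hrb hDa hDb) /(reach_tr L hrb hra).
      by move=> /(M3 np bn0 hfa hfb (v _ hra) (v _ hrb) hDa' hDb').
    + move=> /(M3 np bn0 hfa hfb (v _ hra) (v _ hrb) hDa' hDb') /(reach_tr L hrb hra).
      by move=> /(M3 mp bm0 ha hb hra hrb hDa hDb).
  - move=> j hj; have [hfj [rj [hrj hDj hDj']]] := fQ j hj.
    have [_ e1] := M1 mp bm0 hj hrj hDj.
    have [_ e2] := M1 np bn0 hfj (v _ hrj) hDj'.
    apply/idP/idP.
    + by move=> /e1 /(hasS_tr L hrj) /e2.
    + by move=> /e2 /(hasS_tr L hrj) /e1.
apply: bits_eq => //.
by rewrite (negbTE bm0) (negbTE bn0).
Qed.

Lemma decomp m : exists t m0, ~~ odd m0 /\ m = 2 ^ t * m0 + 2 ^ t - 1.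
Proof.
elim: m {-2}m (leqnn m) => [|k IH] m hm.
  by exists 0, 0; have -> : m = 0 by lia.
case Em: (odd m); last by exists 0, m; rewrite expn0 mul1n addnK Em.
have [t [m0 [o e]]] := IH m./2 ltac:(lia).
exists t.+1, m0; split=> //.
have := odd_double_half m; rewrite Em e expnS; have := expn_gt0 2 t; lia.
Qed.

Theorem mainTheorem11 (m n : nat) :
  A_isomorphic m n <->
  exists t : nat, m = 2 ^ t * n + 2 ^ t - 1 \/ n = 2 ^ t * m + 2 ^ t - 1.
Proof.
split.
- move=> A.
  have [t [m0 [om em]]] := decomp m; have [s [n0 [on en]]] := decomp n.
  have A1 : A_isomorphic m0 n0.
    apply: A_iso_trans (A_iso_pow m0 t) _; rewrite -em.
    apply: A_iso_trans A _; apply: A_iso_sym; rewrite en; exact: A_iso_pow.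
  have [psi L] := liso_of_A A1.
  have e := even_eq om on L; subst n0.
  case: (leqP s t) => hst.
  + exists (t - s); left; rewrite em en.
    have -> : 2 ^ t = 2 ^ (t - s) * 2 ^ s by rewrite -expnD subnK.
    have := expn_gt0 2 (t - s); have := expn_gt0 2 s.
    move: (2 ^ (t - s)) (2 ^ s) => a b ha hb; nia.
  + exists (s - t); right; rewrite em en.
    have -> : 2 ^ s = 2 ^ (s - t) * 2 ^ t by rewrite -expnD subnK //; lia.
    have := expn_gt0 2 (s - t); have := expn_gt0 2 t.
    move: (2 ^ (s - t)) (2 ^ t) => a b ha hb; nia.
- case=> t [->|->]; [apply: A_iso_sym; apply: A_iso_pow | apply: A_iso_pow].
Qed.
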